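(* Let $\mathcal{D}$ be the finite discrete probability distribution monad on $\mathbf{Sets}$, and let $\mathcal{K}\ell(\mathcal{D})_{+1}$ be the category whose objects are sets and whose morphisms $X\to Y$ are functions $f\colon X\to\mathcal{D}(Y+1)$, with composition given for $g\colon Y\to\mathcal{D}(Z+1)$ by $(g\odot f)(x)(z)=\sum_{y\in Y}f(x)(y)\,g(y)(z)$ for $z\in Z$ and $(g\odot f)(x)( * )=f(x)( * )+\sum_{y\in Y}f(x)(y)\,g(y)( * )$. Define $\square\colon\mathcal{K}\ell(\mathcal{D})_{+1}\to\mathbf{PoSets}^{\mathrm{op}}$ by $\square(X)=[0,1]^X$ with the pointwise order, and for $f\colon X\to\mathcal{D}(Y+1)$ and $q\in[0,1]^Y$, $\square(f)(q)(x)=\sum_{y\in Y}f(x)(y)\cdot q(y)+f(x)( * )$. Then the forgetful functor $U\colon\int\square\to\mathcal{K}\ell(\mathcal{D})_{+1}$ has a left adjoint $0$ with $0(X)=(X,\text{const }0)$ and a right adjoint $1$ with $1(X)=(X,\text{const }1)$; moreover there is a functor (comprehension) $\int\square\to\mathcal{K}\ell(\mathcal{D})_{+1}$ with $(X,p)\mapsto\{X\mid p\}=\{x\in X\mid p(x)=1\}$ which is right adjoint to $1$, and a functor (quotient) with $(X,p)\mapsto X/p=\{x\in X\mid p(x)\neq 1\}$ which is left adjoint to $0$.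
   Context: $\mathcal{D}(X)$ is the set of functions $\varphi\colon X\to[0,1]$ with finite support and $\sum_x\varphi(x)=1$; $Y+1=Y\sqcup\{*\}$. For a functor $F\colon\mathcal{B}\to\mathbf{PoSets}^{\mathrm{op}}$, $\int F$ is the category with objects $(X,P)$, $P\in F(X)$, and morphisms $f\colon(X,P)\to(Y,Q)$ the morphisms $f\colon X\to Y$ of $\mathcal{B}$ with $P\le F(f)(Q)$; the forgetful functor sends $(X,P)\mapsto X$, $f\mapsto f$; $0$ and $1$ act as identity on morphisms. *)

(* Defs.v *)
From HB Require Import structures.
From mathcomp Require Import all_boot all_order all_algebra.
From mathcomp Require Import all_classical all_reals.
Set Implicit Arguments.
Unset Strict Implicit.
Unset Printing Implicit Defensive.
Import Order.TTheory GRing.Theory Num.Theory.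
Local Open Scope classical_set_scope.
Local Open Scope ring_scope.

(* A category is given by objects, raw hom types, a predicate [ismor] singling
   out the genuine morphisms among raw ones, identities and composition. *)
Record cat := Cat {
  ob : Type;
  hom : ob -> ob -> Type;
  ismor : forall a b, hom a b -> Prop;
  idm : forall a, hom a a;
  comp : forall a b d, hom b d -> hom a b -> hom a d }.
Arguments ob : clear implicits.
Arguments hom : clear implicits.
Arguments ismor {c a b} _.
Arguments idm {c} _.
Arguments comp {c a b d} _ _.

Record functor (C D : cat) := Functor {
  fob : ob C -> ob D;
  fmor : forall a b, hom C a b -> hom D (fob a) (fob b) }.
Arguments fob {C D}.
Arguments fmor {C D} f {a b}.

Definition is_functor (C D : cat) (F : functor C D) : Prop :=
  (forall a b (f : hom C a b), ismor f -> ismor (fmor F f)) /\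
  (forall a, fmor F (idm a) = idm (fob F a)) /\
  (forall a b c (f : hom C a b) (g : hom C b c), ismor f -> ismor g ->
      fmor F (comp g f) = comp (fmor F g) (fmor F f)).

Definition adjunction (C D : cat) (F : functor C D) (G : functor D C) : Prop :=
  is_functor F /\ is_functor G /\
  exists eta : forall c, hom C c (fob G (fob F c)),
    (forall c, ismor (eta c)) /\
    (forall c c' (h : hom C c c'), ismor h ->
        comp (eta c') h = comp (fmor G (fmor F h)) (eta c)) /\
    (forall c d (f : hom C c (fob G d)), ismor f ->
        exists g : hom D (fob F c) d,
          (ismor g /\ comp (fmor G g) (eta c) = f) /\
          (forall g' : hom D (fob F c) d, ismor g' ->
              comp (fmor G g') (eta c) = f -> g' = g)).

Section Kleisli.
Variable R : realType.

Definition is_dist (X : choiceType) (phi : X -> R) : Prop :=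
  (forall x, 0 <= phi x <= 1) /\
  finite_set [set x | phi x != 0] /\
  \sum_(x \in [set: X]) phi x = 1.

(* Kl(D)_{+1}: objects are sets (choiceTypes), Y+1 = option Y with None = * ;
   raw morphisms X -> Y are functions X -> (option Y -> R) *)
Definition Khom (X Y : choiceType) := X -> option Y -> R.
Definition kmor (X Y : choiceType) (f : Khom X Y) : Prop :=
  forall x, is_dist (f x).
Definition kid (X : choiceType) : Khom X X :=
  fun x o => match o with Some y => if y == x then 1 else 0 | None => 0 end.
Definition kcomp (X Y Z : choiceType) (g : Khom Y Z) (f : Khom X Y) : Khom X Z :=
  fun x o => match o with
  | Some z => \sum_(y \in [set: Y]) f x (Some y) * g y (Some z)
  | None => f x None + \sum_(y \in [set: Y]) f x (Some y) * g y None
  end.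

Definition Kl : cat := @Cat choiceType Khom kmor kid kcomp.

Definition pred01 (X : choiceType) (p : X -> R) : Prop := forall x, 0 <= p x <= 1.
Definition box (X Y : choiceType) (f : Khom X Y) (q : Y -> R) : X -> R :=
  fun x => \sum_(y \in [set: Y]) f x (Some y) * q y + f x None.

Definition Iob := {X : choiceType & {p : X -> R | pred01 p}}.
Definition Icar (A : Iob) : choiceType := projT1 A.
Definition Ipred (A : Iob) : Icar A -> R := proj1_sig (projT2 A).
Arguments Ipred : clear implicits.
Definition Ihom (A B : Iob) := Khom (Icar A) (Icar B).
Definition imor (A B : Iob) (f : Ihom A B) : Prop :=
  kmor f /\ forall x, Ipred A x <= box f (Ipred B) x.
Definition Int : cat :=
  @Cat Iob Ihom imor (fun A => @kid (Icar A))
       (fun A B C (g : Ihom B C) (f : Ihom A B) => kcomp g f).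

Definition forget : functor Int Kl :=
  @Functor Int Kl Icar (fun A B (f : Ihom A B) => f).

Lemma pred01_cst0 (X : choiceType) : pred01 (fun _ : X => 0 : R).
Proof. by move=> _; rewrite lexx ler01. Qed.
Lemma pred01_cst1 (X : choiceType) : pred01 (fun _ : X => 1 : R).
Proof. by move=> _; rewrite lexx ler01. Qed.

Definition zeroI (X : choiceType) : Iob :=
  existT _ X (exist _ (fun _ => 0) (@pred01_cst0 X)).
Definition oneI (X : choiceType) : Iob :=
  existT _ X (exist _ (fun _ => 1) (@pred01_cst1 X)).

Definition zeroF : functor Kl Int :=
  @Functor Kl Int zeroI (fun X Y (f : Khom X Y) => f : Ihom (zeroI X) (zeroI Y)).
Definition oneF : functor Kl Int :=
  @Functor Kl Int oneI (fun X Y (f : Khom X Y) => f : Ihom (oneI X) (oneI Y)).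

Definition cmpr_ob (A : Iob) : choiceType :=
  {x : Icar A | Ipred A x == 1}%type.
Definition quot_ob (A : Iob) : choiceType :=
  {x : Icar A | Ipred A x != 1}%type.

End Kleisli.

(* Main.v *)
Require Import Defs.
From HB Require Import structures.
From mathcomp Require Import all_boot all_order all_algebra.
From mathcomp Require Import all_classical all_reals.

Set Implicit Arguments.
Unset Strict Implicit.
Unset Printing Implicit Defensive.
Import Order.TTheory GRing.Theory Num.Theory.
Local Open Scope classical_set_scope.
Local Open Scope ring_scope.

Section Aux.
Variable R : realType.

Definition fsupp (T : choiceType) (phi : T -> R) := finite_set [set i | phi i != 0].

Lemma sumsE (T : choiceType) (s : seq T) (F : T -> R) :
  (forall i, F i != 0 -> i \in s) ->
  \sum_(i \in [set: T]) F i = \sum_(i <- undup s) F i.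
Proof.
move=> Fs.
rewrite -(fsbig_widen [set` undup s] [set: T] F) //; last first.
  move=> i [_ /=]; rewrite mem_undup => /negP Hi; apply/eqP.
  by apply: contraNT Hi => /Fs.
by rewrite -fsbig_seq ?undup_uniq.
Qed.

Lemma fsupp_seq (T : choiceType) (s : seq T) (F : T -> R) :
  (forall i, F i != 0 -> i \in s) -> fsupp F.
Proof. by move=> Fs; apply: (sub_finite_set _ (finite_seq s)) => i /= /Fs. Qed.

Lemma fsuppP (T : choiceType) (F : T -> R) :
  fsupp F -> exists s : seq T, forall i, F i != 0 -> i \in s.
Proof.
move=> fF; exists (finmap.enum_fset (fset_set [set i | F i != 0])) => i Fi.
by rewrite in_fset_set // inE.
Qed.

Lemma fsupp_sub (T : choiceType) (F G : T -> R) :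
  (forall i, F i != 0 -> G i != 0) -> fsupp G -> fsupp F.
Proof. by move=> FG /fsuppP [s Hs]; apply: (fsupp_seq (s := s)) => i /FG /Hs. Qed.

Lemma fsupp_comp (I J : choiceType) (h : I -> J) (F : J -> R) :
  injective h -> fsupp F -> fsupp (fun i => F (h i)).
Proof.
move=> hi fF; rewrite /fsupp.
have -> : [set i | F (h i) != 0] = h @^-1` [set j | F j != 0] by [].
by apply: finite_preimage => //; move=> x y _ _; apply: hi.
Qed.

Lemma sum_le (T : choiceType) (F G : T -> R) :
  fsupp F -> fsupp G -> (forall i, F i <= G i) ->
  \sum_(i \in [set: T]) F i <= \sum_(i \in [set: T]) G i.
Proof.
move=> /fsuppP [s Hs] /fsuppP [t Ht] FG.
rewrite (@sumsE _ (s ++ t) F) ?(@sumsE _ (s ++ t) G); last 2 first.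
- by move=> i /Ht; rewrite mem_cat orbC => ->.
- by move=> i /Hs; rewrite mem_cat => ->.
by apply: ler_sum => i _.
Qed.

Lemma sumD (T : choiceType) (F G : T -> R) :
  fsupp F -> fsupp G ->
  \sum_(i \in [set: T]) (F i + G i) = \sum_(i \in [set: T]) F i + \sum_(i \in [set: T]) G i.
Proof.
move=> /fsuppP [s Hs] /fsuppP [t Ht].
have HFG : forall i, F i + G i != 0 -> i \in s ++ t.
  move=> i; rewrite mem_cat; have [/Hs -> //|/negPn/eqP ->] := boolP (F i != 0).
  by rewrite add0r => /Ht ->; rewrite orbT.
rewrite (sumsE HFG) (@sumsE _ (s ++ t) F) ?(@sumsE _ (s ++ t) G) ?big_split //.
- by move=> i /Ht; rewrite mem_cat orbC => ->.
- by move=> i /Hs; rewrite mem_cat => ->.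
Qed.

Lemma sumB (T : choiceType) (F G : T -> R) :
  fsupp F -> fsupp G ->
  \sum_(i \in [set: T]) (F i - G i) = \sum_(i \in [set: T]) F i - \sum_(i \in [set: T]) G i.
Proof.
move=> fF fG; rewrite sumD //; last first.
  by apply: fsupp_sub fG => i; rewrite oppr_eq0.
congr (_ + _); rewrite -[RHS]mulN1r mulr_fsumr.
by apply: eq_fsbigr => i _; rewrite mulN1r.
Qed.

Lemma sum_delta (T : choiceType) (z : T) (F : T -> R) :
  (forall i, i != z -> F i = 0) -> \sum_(i \in [set: T]) F i = F z.
Proof.
move=> Fz; rewrite (@sumsE _ [:: z]) /= ?big_seq1 // => i.
by case: (eqVneq i z) => [->|/Fz ->]; rewrite ?mem_head ?eqxx.
Qed.

Lemma sum_ge0 (T : choiceType) (F : T -> R) :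
  (forall i, 0 <= F i) -> 0 <= \sum_(i \in [set: T]) F i.
Proof. by move=> F0; apply: fsumr_ge0. Qed.

Lemma sum_ge_term (T : choiceType) (F : T -> R) (j : T) :
  (forall i, 0 <= F i) -> fsupp F -> F j <= \sum_(i \in [set: T]) F i.
Proof.
move=> F0 /fsuppP [s Hs]; rewrite (@sumsE _ (j :: s)); last first.
  by move=> i /Hs; rewrite inE => ->; rewrite orbT.
rewrite (bigD1_seq j) ?mem_undup ?mem_head ?undup_uniq //=.
by rewrite lerDl sumr_ge0.
Qed.

Lemma sum_eq0 (T : choiceType) (F : T -> R) (j : T) :
  (forall i, 0 <= F i) -> fsupp F -> \sum_(i \in [set: T]) F i = 0 -> F j = 0.
Proof.
move=> F0 fF S0; apply/eqP; rewrite eq_le F0 andbT -S0.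
exact: sum_ge_term.
Qed.

Lemma sum_opt (T : choiceType) (F : option T -> R) :
  fsupp F ->
  \sum_(o \in [set: option T]) F o = F None + \sum_(y \in [set: T]) F (Some y).
Proof.
move=> /fsuppP [s Hs].
rewrite (@sumsE _ (None :: map Some (pmap id s))); last first.
  case=> [y|] Fy; rewrite inE //; apply/orP; right.
  by rewrite mem_map; [rewrite mem_pmap; apply/mapP; exists (Some y) => //; apply: Hs|move=> a b []].
rewrite (@sumsE _ (pmap id s) (fun y => F (Some y))); last first.
  move=> y /Hs Hy; rewrite mem_pmap; apply/mapP; by exists (Some y).
rewrite /= ifN; last by apply/mapP => -[].
by rewrite big_cons undup_map_inj ?big_map //; move=> a b [].
Qed.

Lemma exch (I J : choiceType) (s : seq I) (t : seq J) (F : I -> J -> R) :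
  (forall i j, F i j != 0 -> (i \in s) && (j \in t)) ->
  \sum_(i \in [set: I]) \sum_(j \in [set: J]) F i j =
  \sum_(j \in [set: J]) \sum_(i \in [set: I]) F i j.
Proof.
move=> HF.
have Hj : forall i j, F i j != 0 -> j \in t by move=> i j /HF /andP[].
have Hi : forall j i, F i j != 0 -> i \in s by move=> i j /HF /andP[].
have H1 i : \sum_(j \in [set: J]) F i j = \sum_(j <- undup t) F i j.
  by apply: sumsE => j; apply: Hj.
have H2 j : \sum_(i \in [set: I]) F i j = \sum_(i <- undup s) F i j.
  by apply: sumsE => i; apply: Hi.
under eq_fsbigr do rewrite H1.
under [RHS]eq_fsbigr do rewrite H2.
rewrite (@sumsE _ s); last first.
  move=> i; apply: contraNT => his; rewrite big1_seq // => j _.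
  by apply/eqP; apply: contraNT his => /Hi.
rewrite (@sumsE _ t); last first.
  move=> j; apply: contraNT => hjt; rewrite big1_seq // => i _.
  by apply/eqP; apply: contraNT hjt => /Hj.
exact: exchange_big.
Qed.

Lemma sum_sub (T : choiceType) (P : pred T) (F : T -> R) :
  (forall y, ~~ P y -> F y = 0) ->
  \sum_(u \in [set: {y | P y}]) F (val u) = \sum_(y \in [set: T]) F y.
Proof.
move=> FP.
rewrite -(fsbig_widen [set y | P y] [set: T] F) //; last first.
  by move=> y [_ /= /negP Py]; apply: FP.
rewrite (reindex_fsbig val [set: {y | P y}] [set y | P y]) //.

Qed.

End Aux.

Section K.
Variable R : realType.

Definition supp (T : choiceType) (phi : T -> R) : seq T :=
  finmap.enum_fset (fset_set [set i | phi i != 0]).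

Lemma suppP (T : choiceType) (phi : T -> R) i :
  fsupp phi -> phi i != 0 -> i \in supp phi.
Proof. by move=> fp pi; rewrite /supp in_fset_set // inE. Qed.

Lemma sum_neq0 (T : choiceType) (F : T -> R) :
  \sum_(i \in [set: T]) F i != 0 -> exists i, F i != 0.
Proof.
apply: contraNP => H; apply/eqP; apply: fsbig1 => i _.
by case: (eqVneq (F i) 0) => // Fi; exfalso; apply: H; exists i.
Qed.

Lemma dist_fsupp (X : choiceType) (phi : X -> R) : is_dist phi -> fsupp phi.
Proof. by case=> _ []. Qed.

Lemma dist_ge0 (X : choiceType) (phi : X -> R) x : is_dist phi -> 0 <= phi x.
Proof. by case=> /(_ x) /andP[]. Qed.

Lemma dist_le1 (X : choiceType) (phi : X -> R) x : is_dist phi -> phi x <= 1.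
Proof. by case=> /(_ x) /andP[]. Qed.

Lemma dist_sum (X : choiceType) (phi : X -> R) :
  is_dist phi -> \sum_(x \in [set: X]) phi x = 1.
Proof. by case=> _ []. Qed.

Lemma is_distI (X : choiceType) (phi : X -> R) : (forall x, 0 <= phi x) ->
  fsupp phi -> \sum_(x \in [set: X]) phi x = 1 -> is_dist phi.
Proof.
move=> p0 fp s1; split; last by split.
by move=> x; rewrite p0 /= -s1; exact: sum_ge_term.
Qed.

Lemma kid_delta (X : choiceType) (x : X) o :
  kid R x o = (if o == Some x then 1 else 0).
Proof. by case: o. Qed.

Lemma kmor_kid (X : choiceType) : kmor (kid R (X:=X)).
Proof.
move=> x; apply: is_distI.
- by move=> o; rewrite kid_delta; case: ifP.
- apply: (fsupp_seq (s:=[:: Some x])) => o; rewrite kid_delta.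
  by case: (eqVneq o (Some x)) => [-> _|_]; rewrite ?mem_head ?eqxx.
- rewrite (sum_delta (z := Some x)); first by rewrite kid_delta eqxx.
  by move=> o /negbTE oN; rewrite kid_delta oN.
Qed.

Lemma kcomp_kidl (X Y : choiceType) (h : Khom R X Y) : kcomp (@kid R _) h = h.
Proof.
apply/funext=> x; apply/funext; case=> [z|] /=.
- rewrite (sum_delta (z:=z)); first by rewrite /= eqxx mulr1.
  by move=> y /negbTE yz; rewrite /kid eq_sym yz mulr0.
- by rewrite fsbig1 ?addr0 // => y _; rewrite mulr0.
Qed.

Lemma kcomp_kidr (X Y : choiceType) (h : Khom R X Y) : kcomp h (@kid R _) = h.
Proof.
apply/funext=> x; apply/funext; case=> [z|] /=.
- rewrite (sum_delta (z:=x)); first by rewrite /= eqxx mul1r.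
  by move=> y /negbTE yz; rewrite /kid yz mul0r.
- rewrite add0r (sum_delta (z:=x)); first by rewrite /= eqxx mul1r.
  by move=> y /negbTE yz; rewrite /kid yz mul0r.
Qed.

Definition L (X Y : choiceType) (g : Khom R X Y) (o : option X) : option Y -> R :=
  match o with Some y => g y | None => fun o' => if o' is None then 1 else 0 end.

Lemma L_dist (X Y : choiceType) (g : Khom R X Y) o : kmor g -> is_dist (L g o).
Proof.
case: o => [y|] kg /=; first exact: kg.
apply: is_distI.
- by case.
- by apply: (fsupp_seq (s:=[:: None])); case => [y|] /=; rewrite ?eqxx ?mem_head.
- by rewrite (sum_delta (z := None)) //; case=> [y|] //; rewrite eqxx.
Qed.

Lemma kcompE (X Y Z : choiceType) (g : Khom R Y Z) (f : Khom R X Y) x o :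
  fsupp (f x) ->
  kcomp g f x o = \sum_(o' \in [set: option Y]) f x o' * L g o' o.
Proof.
move=> ff; rewrite sum_opt; last first.
  by apply: fsupp_sub ff => o' /=; apply: contraNneq => ->; rewrite mul0r.
by case: o => [z|] /=; rewrite ?mulr0 ?add0r ?mulr1.
Qed.

Definition tsupp (Y Z : choiceType) (g : Khom R Y Z) (s : seq (option Y)) :=
  flatten [seq supp (L g o') | o' <- s].

Lemma kcomp_nz (X Y Z : choiceType) (g : Khom R Y Z) (f : Khom R X Y) x o' o :
  kmor f -> kmor g -> f x o' * L g o' o != 0 ->
  (o' \in supp (f x)) && (o \in tsupp g (supp (f x))).
Proof.
move=> kf kg; rewrite mulf_eq0 negb_or => /andP[h1 h2].
have i1 : o' \in supp (f x) by apply: suppP => //; apply: dist_fsupp.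
rewrite i1 /=; apply/flatten_mapP; exists o' => //.
by apply: suppP => //; apply: dist_fsupp; apply: L_dist.
Qed.

Lemma kcomp_fsupp (X Y Z : choiceType) (g : Khom R Y Z) (f : Khom R X Y) x :
  kmor f -> kmor g -> fsupp (kcomp g f x).
Proof.
move=> kf kg; apply: (fsupp_seq (s := tsupp g (supp (f x)))) => o.
rewrite kcompE; last exact: dist_fsupp.
by move=> /sum_neq0 [o' /(kcomp_nz kf kg) /andP[]].
Qed.

Lemma kmor_comp (X Y Z : choiceType) (g : Khom R Y Z) (f : Khom R X Y) :
  kmor f -> kmor g -> kmor (kcomp g f).
Proof.
move=> kf kg x; have ff : fsupp (f x) by apply: dist_fsupp.
apply: is_distI.
- move=> o; rewrite kcompE //; apply: sum_ge0 => o'.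
  by rewrite mulr_ge0 // dist_ge0 //; apply: L_dist.
- exact: kcomp_fsupp.
under eq_fsbigr do rewrite kcompE //.
rewrite -(exch (s := supp (f x)) (t := tsupp g (supp (f x)))
   (F := fun o' o => f x o' * L g o' o)); last first.
  by move=> o' o /(kcomp_nz kf kg).
have Hs o' : \sum_(o \in [set: option Z]) L g o' o = 1.
  by apply: dist_sum; apply: L_dist.
under eq_fsbigr do rewrite -mulr_fsumr Hs mulr1.
exact: dist_sum.
Qed.

Lemma L_comp (X Y Z : choiceType) (h : Khom R Y Z) (g : Khom R X Y) o'' o :
  kmor g ->
  L (kcomp h g) o'' o = \sum_(o' \in [set: option Y]) L g o'' o' * L h o' o.
Proof.
move=> kg; case: o'' => [y|] /=.
- by rewrite kcompE //; apply: dist_fsupp.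
- rewrite (sum_delta (z := None)) /= ?mul1r //.
  by case=> // y _; rewrite mul0r.
Qed.

Lemma kassoc (X Y Z W : choiceType) (h : Khom R Z W) (g : Khom R Y Z)
  (f : Khom R X Y) : kmor f -> kmor g ->
  kcomp h (kcomp g f) = kcomp (kcomp h g) f.
Proof.
move=> kf kg; apply/funext => x; apply/funext => o.
have ff : fsupp (f x) by apply: dist_fsupp.
rewrite kcompE; last exact: kcomp_fsupp.
rewrite [RHS]kcompE //.
under eq_fsbigr do rewrite kcompE // mulr_fsuml.
under [RHS]eq_fsbigr do rewrite L_comp // mulr_fsumr.
rewrite -(exch (s := supp (f x)) (t := tsupp g (supp (f x)))
   (F := fun o'' o' => f x o'' * L g o'' o' * L h o' o)); last first.
  move=> o'' o'; rewrite mulf_eq0 negb_or => /andP[+ _].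
  by move/(kcomp_nz kf kg).
by apply: eq_fsbigr => o'' _; apply: eq_fsbigr => o' _; rewrite mulrA.
Qed.

End K.

Section C.
Variable R : realType.

Lemma Ipred_ge0 (A : Iob R) x : 0 <= @Ipred R A x.
Proof. by case/andP: (proj2_sig (projT2 A) x). Qed.
Lemma Ipred_le1 (A : Iob R) x : @Ipred R A x <= 1.
Proof. by case/andP: (proj2_sig (projT2 A) x). Qed.

Lemma kge0 (X Y : choiceType) (f : Khom R X Y) x o : kmor f -> 0 <= f x o.
Proof. by move=> kf; apply: dist_ge0 (kf x). Qed.

Definition qk (Y : choiceType) (q : Y -> R) : Khom R Y Y :=
  fun y o => if o is None then q y else 0.

Lemma boxE (X Y : choiceType) (f : Khom R X Y) q x :
  box f q x = kcomp (qk q) f x None.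
Proof. by rewrite /box /= addrC. Qed.

Lemma box_comp (X Y Z : choiceType) (f : Khom R X Y) (g : Khom R Y Z) r x :
  kmor f -> kmor g -> box (kcomp g f) r x = box f (box g r) x.
Proof.
move=> kf kg; rewrite boxE kassoc //= [RHS]/box addrC; congr (_ + _).
by apply: eq_fsbigr => y _; rewrite boxE.
Qed.

Lemma fsupp_some (X Y : choiceType) (f : Khom R X Y) x (q : Y -> R) :
  kmor f -> fsupp (fun y => f x (Some y) * q y).
Proof.
move=> kf; apply: (@fsupp_sub _ _ _ (fun y => f x (Some y))).
  by move=> y; apply: contraNneq => ->; rewrite mul0r.
by apply: (fsupp_comp (h := Some)) => [a b []//|]; apply: dist_fsupp.
Qed.

Lemma box_mono (X Y : choiceType) (f : Khom R X Y) (q q' : Y -> R) x :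
  kmor f -> (forall y, q y <= q' y) -> box f q x <= box f q' x.
Proof.
move=> kf qq; rewrite /box lerD2r; apply: sum_le; try exact: fsupp_some.
by move=> y; rewrite ler_wpM2l // kge0.
Qed.

Lemma box_one (X Y : choiceType) (f : Khom R X Y) x :
  kmor f -> box f (fun _ => 1) x = 1.
Proof.
move=> kf; rewrite /box; under eq_fsbigr do rewrite mulr1.
by rewrite addrC -sum_opt ?dist_sum //; apply: dist_fsupp.
Qed.

Lemma box_ge0 (X Y : choiceType) (f : Khom R X Y) q x :
  kmor f -> (forall y, 0 <= q y) -> 0 <= box f q x.
Proof.
move=> kf q0; rewrite /box; apply: addr_ge0; last exact: kge0.
by apply: sum_ge0 => y; rewrite mulr_ge0 ?kge0.
Qed.

Lemma box_le1 (X Y : choiceType) (f : Khom R X Y) q x :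
  kmor f -> (forall y, q y <= 1) -> box f q x <= 1.
Proof. by move=> kf q1; rewrite -(box_one x kf); apply: box_mono. Qed.

Lemma imor_comp (A B C : Iob R) (f : Ihom A B) (g : Ihom B C) :
  imor f -> imor g -> imor (B:=C) (kcomp g f).
Proof.
move=> [kf pf] [kg pg]; split; first exact: kmor_comp.
move=> x; apply: (le_trans (pf x)); rewrite box_comp //.
exact: box_mono.
Qed.

Lemma massM (A B : Iob R) (f : Ihom A B) x y :
  imor f -> @Ipred R A x = 1 -> @Ipred R B y != 1 -> f x (Some y) = 0.
Proof.
move=> [kf pf] px qy.
set q := @Ipred R B.
have fs : fsupp (fun y => f x (Some y)).
  by apply: (fsupp_comp (h := Some)) => [a b []//|]; apply: dist_fsupp.
have S0 : \sum_(y \in [set: Icar B]) f x (Some y) * (1 - q y) = 0.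
  apply/eqP; rewrite eq_le sum_ge0 ?andbT; last first.
    by move=> z; rewrite mulr_ge0 ?kge0 // subr_ge0 Ipred_le1.
  under eq_fsbigr do rewrite mulrBr mulr1.
  rewrite sumB //; last exact: fsupp_some.
  have := dist_sum (kf x); rewrite sum_opt; last exact: dist_fsupp.
  move=> Hs; have := pf x; rewrite px /box => Hb.
  rewrite subr_le0; move: Hs Hb; set S := \sum_(_ \in _) _; set T := \sum_(_ \in _) _.
  by move=> Hs Hb; rewrite -(lerD2r (f x None)) [X in X <= _]addrC Hs.
have H0 : f x (Some y) * (1 - q y) = 0.
  apply: (@sum_eq0 _ _ (fun y => f x (Some y) * (1 - q y)) y) => //.
  - by move=> z; rewrite mulr_ge0 ?kge0 // subr_ge0 Ipred_le1.
  - exact: fsupp_some.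
move/eqP: H0; rewrite mulf_eq0 subr_eq0 [1 == _]eq_sym (negbTE qy) orbF.
by move/eqP.
Qed.

End C.

Section D.
Variable R : realType.

Lemma zeroF_functor : is_functor (zeroF R).
Proof.
split; [|split] => //= a b f kf; split => // x /=.
by apply: box_ge0 => // y.
Qed.

Lemma oneF_functor : is_functor (oneF R).
Proof.
split; [|split] => //= a b f kf; split => // x /=.
by rewrite box_one.
Qed.

Lemma forget_functor : is_functor (forget R).
Proof. by split; [|split] => //= a b f []. Qed.

Lemma part1 : adjunction (zeroF R) (forget R).
Proof.
split; [exact: zeroF_functor|split; [exact: forget_functor|]].
exists (fun c => @kid R c); split; [|split].
- by move=> c; apply: kmor_kid.
- by move=> c c' h _ /=; rewrite kcomp_kidl kcomp_kidr.
- move=> c d f kf; exists f; split.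
    split; last by rewrite /= kcomp_kidr.
    by split => // x /=; apply: box_ge0 => // y; apply: Ipred_ge0.
  by move=> g' _ /=; rewrite kcomp_kidr.
Qed.

Lemma part2 : adjunction (forget R) (oneF R).
Proof.
split; [exact: forget_functor|split; [exact: oneF_functor|]].
exists (fun c => @kid R (Icar c)); split; [|split].
- move=> c; split; first exact: kmor_kid.
  by move=> x /=; rewrite box_one ?Ipred_le1 //; apply: kmor_kid.
- by move=> c c' h _ /=; rewrite kcomp_kidl kcomp_kidr.
- move=> c d f [kf _]; exists f; split.
    by split => //; rewrite /= kcomp_kidr.
  by move=> g' _ /=; rewrite kcomp_kidr.
Qed.

End D.

Section E.
Variable R : realType.

Definition cm (A B : Iob R) (f : Ihom A B) : Khom R (cmpr_ob A) (cmpr_ob B) :=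
  fun u o => f (val u) (omap val o).

Definition eta3 (X : choiceType) : Khom R X (cmpr_ob (oneI R X)) :=
  fun x o => match o with Some v => if val v == x then 1 else 0 | None => 0 end.

Definition exq (X : choiceType) (x : X) : cmpr_ob (oneI R X) :=
  exist _ x (eqxx (1 : R)).

Lemma sum_cmpr (A : Iob R) (F : Icar A -> R) :
  (forall y, @Ipred R A y != 1 -> F y = 0) ->
  \sum_(u \in [set: cmpr_ob A]) F (val u) = \sum_(y \in [set: Icar A]) F y.
Proof. by move=> HF; apply: (sum_sub (P := fun y => @Ipred R A y == 1)). Qed.


Lemma eta3_delta (X : choiceType) (x : X) o :
  eta3 x o = if o == Some (exq x) then 1 else 0.
Proof. by case: o => [v|] //=; rewrite -val_eqE. Qed.

Lemma kmor_eta3 (X : choiceType) : kmor (@eta3 X).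
Proof.
move=> x; apply: is_distI.
- by move=> o; rewrite eta3_delta; case: ifP.
- apply: (fsupp_seq (s:=[:: Some (exq x)])) => o; rewrite eta3_delta.
  by case: (eqVneq o (Some (exq x))) => [-> _|_]; rewrite ?mem_head ?eqxx.
- rewrite (sum_delta (z := Some (exq x))); first by rewrite eta3_delta eqxx.
  by move=> o /negbTE oN; rewrite eta3_delta oN.
Qed.

Lemma cm_eta (X : choiceType) (d : Iob R) (g : Ihom (oneI R X) d) x o :
  kcomp (cm g) (@eta3 X) x o = g x (omap val o).
Proof.
case: o => [w|] /=.
- rewrite (sum_delta (z := exq x)) /=; first by rewrite eqxx mul1r.
  move=> u ux; have -> : (val u == x) = false.
    by apply/negbTE; apply: contra ux => /eqP H; apply/eqP; apply: val_inj.
  by rewrite mul0r.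
- rewrite add0r (sum_delta (z := exq x)) /=; first by rewrite eqxx mul1r.
  move=> u ux; have -> : (val u == x) = false.
    by apply/negbTE; apply: contra ux => /eqP H; apply/eqP; apply: val_inj.
  by rewrite mul0r.
Qed.

Lemma eta_k (X Y : choiceType) (h : Khom R X Y) x o :
  kcomp (@eta3 Y) h x o = h x (omap val o).
Proof.
case: o => [v|] /=.
- rewrite (sum_delta (z := val v)) /=; first by rewrite eqxx mulr1.
  by move=> y /negbTE vy; rewrite eq_sym vy mulr0.
- by rewrite fsbig1 ?addr0 // => y _; rewrite mulr0.
Qed.

Lemma kmor_cm (A B : Iob R) (f : Ihom A B) : imor f -> kmor (cm f).
Proof.
move=> imf u; have [kf _] := imf.
have px : @Ipred R A (val u) = 1 by apply/eqP; apply: (valP u).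
have fs : fsupp (cm f u).
  by apply: (fsupp_comp (F := f (val u))); [apply: inj_omap; apply: val_inj|apply: dist_fsupp].
apply: is_distI => //.
- by move=> o; apply: (kge0 (f := f)).
rewrite sum_opt // /cm /=.
rewrite (sum_cmpr (F := fun y => f (val u) (Some y))); last first.
  by move=> y qy; apply: massM.
by rewrite -sum_opt ?dist_sum //; apply: dist_fsupp.
Qed.

Lemma cm_id (A : Iob R) : cm (@kid R (Icar A)) = @kid R (cmpr_ob A).
Proof.
apply/funext => u; apply/funext; case=> [v|] //=.
Qed.

Lemma cm_comp (A B C : Iob R) (f : Ihom A B) (g : Ihom B C) :
  imor f -> imor g -> cm (kcomp g f) = kcomp (cm g) (cm f).
Proof.
move=> imf img; apply/funext => u; apply/funext.
have px : @Ipred R A (val u) = 1 by apply/eqP; apply: (valP u).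
case=> [w|] /=; rewrite /cm /=.
- rewrite (sum_cmpr (F := fun y => f (val u) (Some y) * g y (Some (val w)))) //.
  by move=> y qy; rewrite (massM imf px qy) mul0r.
- rewrite (sum_cmpr (F := fun y => f (val u) (Some y) * g y None)) //.
  by move=> y qy; rewrite (massM imf px qy) mul0r.
Qed.

End E.

Section F.
Variable R : realType.

Definition gext (X : choiceType) (d : Iob R) (f : Khom R X (cmpr_ob d)) :
    Ihom (oneI R X) d :=
  fun x o => match o with
  | None => f x None
  | Some y => match (insub y : option (cmpr_ob d)) with
              | Some v => f x (Some v) | None => 0 end
  end.

Lemma gext_val (X : choiceType) (d : Iob R) (f : Khom R X (cmpr_ob d)) x o :
  gext f x (omap val o) = f x o.
Proof. by case: o => [v|] //=; rewrite valK. Qed.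

Lemma gext_N (X : choiceType) (d : Iob R) (f : Khom R X (cmpr_ob d)) x y :
  @Ipred R d y != 1 -> gext f x (Some y) = 0.
Proof. by move=> qy /=; rewrite insubN. Qed.

Lemma imor_gext (X : choiceType) (d : Iob R) (f : Khom R X (cmpr_ob d)) :
  kmor f -> imor (gext f).
Proof.
move=> kf.
have fs : forall x, fsupp (gext f x).
  move=> x; apply: (fsupp_seq (s := map (omap val) (supp (f x)))).
  have Hm : forall o, f x o != 0 -> omap val o \in map (omap val) (supp (f x)).
    by move=> o Ho; apply: map_f; apply: suppP => //; apply: dist_fsupp.
  case=> [y|] /=.
  - by case: insubP => [v Pv <-|_]; [exact: (Hm (Some v))|rewrite eqxx].
  - exact: (Hm None).
have S1 : forall x, \sum_(y \in [set: Icar d]) gext f x (Some y) =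
                    \sum_(v \in [set: cmpr_ob d]) f x (Some v).
  move=> x; rewrite -(sum_cmpr (F := fun y => gext f x (Some y))); last first.
    by move=> y; apply: gext_N.
  by apply: eq_fsbigr => v _; rewrite (gext_val f x (Some v)).
split.
- move=> x; apply: is_distI => //.
  + case=> [y|] /=; last exact: kge0.
    by case: insubP => [v _ _|//]; apply: kge0.
  + rewrite sum_opt // S1; change (gext f x None) with (f x None).
    by rewrite -(sum_opt (F := f x)) ?dist_sum //; apply: dist_fsupp.
- move=> x /=; rewrite /box.
  rewrite (_ : \sum_(y \in [set: Icar d]) _ = \sum_(y \in [set: Icar d]) gext f x (Some y)).
    rewrite S1 addrC; change (gext f x None) with (f x None).
    by rewrite -(sum_opt (F := f x)) ?dist_sum //; apply: dist_fsupp.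
  apply: eq_fsbigr => y _.
  have [qy|qy] := eqVneq (@Ipred R d y) 1; first by rewrite qy mulr1.
  by rewrite gext_N // mul0r.
Qed.

Definition cmprF : functor (Int R) (Kl R) := @Functor (Int R) (Kl R) (@cmpr_ob R) (@cm R).

Lemma cmpr_functor : is_functor cmprF.
Proof.
split; [|split] => /=.
- by move=> a b f imf; apply: kmor_cm.
- by move=> a; apply: cm_id.
- by move=> a b c f g imf img; apply: cm_comp.
Qed.

Lemma part3 : adjunction (oneF R) cmprF.
Proof.
split; [exact: oneF_functor|split; [exact: cmpr_functor|]].
exists (fun X => @eta3 R X); split; [|split].
- by move=> c; apply: kmor_eta3.
- move=> c c' h _ /=; apply/funext => x; apply/funext => o.
  by rewrite cm_eta eta_k.
- move=> c d f kf; exists (gext f); split.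
    split; first exact: imor_gext.
    by apply/funext => x; apply/funext => o; rewrite /= cm_eta gext_val.
  move=> g' img' /= H; apply/funext => x; apply/funext; case=> [y|].
  + rewrite /gext; case: insubP => [v Pv <-|nP] /=.
      by rewrite -(cm_eta g' x (Some v)) H.
    by apply: (massM img').
  + by rewrite -(cm_eta g' x None) H.
Qed.

End F.

Section G.
Variable R : realType.

Definition eta4 (A : Iob R) : Ihom A (zeroI R (quot_ob A)) :=
  fun x o => match o with
  | Some u => if val u == x then 1 - @Ipred R A x else 0
  | None => @Ipred R A x end.

Definition phi (A : Iob R) (Y : choiceType) (f : Ihom A (zeroI R Y)) :
    Khom R (quot_ob A) Y :=
  fun u o => (f (val u) o - (if o is None then @Ipred R A (val u) else 0)) /
             (1 - @Ipred R A (val u)).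

Lemma sum_eta_a (A : Iob R) (x : Icar A) (G : quot_ob A -> R) :
  @Ipred R A x = 1 ->
  \sum_(u \in [set: quot_ob A]) (if val u == x then 1 - @Ipred R A x else 0) * G u = 0.
Proof.
move=> px; apply: fsbig1 => u _.
by case: ifP => _; rewrite ?px ?subrr mul0r.
Qed.

Lemma sum_eta_b (A : Iob R) (u0 : quot_ob A) (G : quot_ob A -> R) :
  \sum_(u \in [set: quot_ob A])
     (if val u == val u0 then 1 - @Ipred R A (val u0) else 0) * G u =
  (1 - @Ipred R A (val u0)) * G u0.
Proof.
rewrite (sum_delta (z := u0)) ?eqxx // => u uu0.
by rewrite val_eqE (negbTE uu0) mul0r.
Qed.

Lemma ketaE1 (A : Iob R) (Y : choiceType) (k : Khom R (quot_ob A) Y) x o :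
  @Ipred R A x = 1 -> kcomp k (@eta4 A) x o = if o is None then 1 else 0.
Proof.
move=> px; case: o => [z|] /=.
- exact: (@sum_eta_a A x (fun u => k u (Some z))).
- by rewrite (@sum_eta_a A x (fun u => k u None)) // px addr0.
Qed.

Lemma ketaE2 (A : Iob R) (Y : choiceType) (k : Khom R (quot_ob A) Y) u o :
  kcomp k (@eta4 A) (val u) o =
  (if o is None then @Ipred R A (val u) else 0) + (1 - @Ipred R A (val u)) * k u o.
Proof.
case: o => [z|] /=.
- by rewrite (@sum_eta_b A u (fun u => k u (Some z))) add0r.
- by rewrite (@sum_eta_b A u (fun u => k u None)).
Qed.

Lemma aneq0 (A : Iob R) (u : quot_ob A) : 1 - @Ipred R A (val u) != 0.
Proof. by rewrite subr_eq0 eq_sym; apply: (valP u). Qed.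

Lemma box_zero (X Y : choiceType) (f : Khom R X Y) x :
  box f (fun _ => 0) x = f x None.
Proof. by rewrite /box fsbig1 ?add0r // => y _; rewrite mulr0. Qed.

Lemma imor_eta4 (A : Iob R) : imor (@eta4 A).
Proof.
split; last by move=> x; rewrite /= box_zero.
move=> x.
have H1 : forall u : quot_ob A, 0 <= (if val u == x then 1 - @Ipred R A x else 0).
  by move=> u; case: ifP => _ //; rewrite subr_ge0 Ipred_le1.
have [px|px] := eqVneq (@Ipred R A x) 1.
- apply: is_distI.
  + by case=> [u|] /=; [apply: H1|apply: Ipred_ge0].
  + apply: (fsupp_seq (s := [:: None])); case=> [u|] /=; rewrite ?mem_head //.
    by case: ifP => _; rewrite ?px ?subrr eqxx.
  + rewrite sum_opt /=.
      rewrite (_ : \sum_(u \in _) _ = 0) ?px ?addr0 //.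
      by apply: fsbig1 => u _; case: ifP => _; rewrite ?px ?subrr.
    apply: (fsupp_seq (s := [:: None])); case=> [u|] /=; rewrite ?mem_head //.
    by case: ifP => _; rewrite ?px ?subrr eqxx.
- pose u0 : quot_ob A := exist _ x px.
  have fs : fsupp (@eta4 A x).
    apply: (fsupp_seq (s := [:: None; Some u0])); case=> [u|] /=; rewrite ?inE //.
    case: ifP => [/eqP Hx _|_]; last by rewrite eqxx.
    by apply/orP; right; apply/eqP; congr Some; apply: val_inj; exact: Hx.
  rewrite -[x]/(val u0) in fs *.
  apply: is_distI => //.
  + by case=> [u|] /=; [apply: H1|apply: Ipred_ge0].
  + rewrite sum_opt //=.
    transitivity (@Ipred R A (val u0) + \sum_(u \in [set: quot_ob A])
        (if val u == val u0 then 1 - @Ipred R A (val u0) else 0) * 1).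
      by congr (_ + _); apply: eq_fsbigr => u _; rewrite mulr1.
    by rewrite sum_eta_b mulr1 addrC subrK.
Qed.

Lemma U2 (A : Iob R) (Y : choiceType) (k : Khom R (quot_ob A) Y)
    (f : Ihom A (zeroI R Y)) :
  kcomp k (@eta4 A) = f -> k = phi f.
Proof.
move=> H; apply/funext => u; apply/funext => o.
rewrite /phi -H ketaE2 addrAC subrr add0r mulrC mulrA mulVf ?mul1r //.
exact: aneq0.
Qed.

Lemma U1 (A : Iob R) (Y : choiceType) (f : Ihom A (zeroI R Y)) :
  imor f -> kcomp (phi f) (@eta4 A) = f.
Proof.
move=> imf; have [kf _] := imf.
apply/funext => x; apply/funext => o.
have [px|px] := eqVneq (@Ipred R A x) 1.
- have fS : forall z, f x (Some z) = 0.
    by move=> z; apply: (massM imf px); rewrite /= eq_sym oner_neq0.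
  rewrite ketaE1 //; case: o => [z|]; first by rewrite fS.
  have := dist_sum (kf x); rewrite sum_opt; last exact: dist_fsupp.
  by rewrite fsbig1 ?addr0 // => z _; rewrite fS.
- pose u0 : quot_ob A := exist _ x px.
  rewrite -[x]/(val u0) ketaE2 /phi mulrCA mulfV; last exact: aneq0.
  by rewrite mulr1 addrC subrK.
Qed.

Lemma kmor_phi (A : Iob R) (Y : choiceType) (f : Ihom A (zeroI R Y)) :
  imor f -> kmor (phi f).
Proof.
move=> [kf pf] u; set x := val u.
have a0 : 0 < 1 - @Ipred R A x.
  by rewrite lt_neqAle eq_sym aneq0 subr_ge0 Ipred_le1.
have fc : fsupp (fun o : option Y => if o is None then @Ipred R A x else 0).
  by apply: (fsupp_seq (s := [:: None])); case=> [z|] /=; rewrite ?mem_head ?eqxx.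
apply: is_distI.
- case=> [z|] /=; rewrite /phi divr_ge0 ?(ltW a0) //=.
  + by rewrite subr0; apply: kge0.
  + by rewrite subr_ge0; have := pf x; rewrite box_zero.
- apply: (fsupp_seq (s := None :: supp (f x))); case=> [z|] /=; rewrite ?mem_head //.
  rewrite /phi subr0 mulf_eq0 negb_or => /andP[H _].
  by rewrite inE /=; apply: suppP => //; apply: dist_fsupp.
- rewrite /phi -mulr_fsuml sumB //; last exact: dist_fsupp.
  rewrite dist_sum // (sum_delta (z := None)) ?mulfV //.
    by rewrite gt_eqF.
  by case.
Qed.

Definition qm (A B : Iob R) (h : Ihom A B) : Khom R (quot_ob A) (quot_ob B) :=
  phi (Y := quot_ob B) (kcomp (@eta4 B) h).

Lemma imor_eh (A B : Iob R) (h : Ihom A B) :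
  imor h -> imor (B := zeroI R (quot_ob B)) (kcomp (@eta4 B) h).
Proof. by move=> imh; apply: imor_comp => //; apply: imor_eta4. Qed.

Lemma kmor_qm (A B : Iob R) (h : Ihom A B) : imor h -> kmor (qm h).
Proof. by move=> imh; apply: kmor_phi; apply: imor_eh. Qed.

Definition quotF : functor (Int R) (Kl R) :=
  @Functor (Int R) (Kl R) (@quot_ob R) (@qm).

Lemma quot_functor : is_functor quotF.
Proof.
split; [|split] => /=.
- by move=> a b f imf; apply: kmor_qm.
- move=> a; symmetry; apply: U2.
  by rewrite kcomp_kidl kcomp_kidr.
- move=> a b c f g imf img; symmetry; apply: U2.
  have ke : forall A, kmor (@eta4 A) by move=> A; case: (imor_eta4 A).
  have kf : kmor f by case: imf.
  have kg : kmor g by case: img.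
  rewrite -kassoc; [|exact: ke|exact: kmor_qm].
  rewrite U1; last exact: imor_eh.
  rewrite [LHS]kassoc; [|exact: kf|exact: ke].
  rewrite U1; last exact: imor_eh.
  by rewrite [RHS]kassoc.
Qed.

Lemma part4 : adjunction quotF (zeroF R).
Proof.
split; [exact: quot_functor|split; [exact: zeroF_functor|]].
exists (fun A => @eta4 A); split; [|split].
- by move=> c; apply: imor_eta4.
- move=> c c' h imh /=.
  by rewrite U1 //; apply: imor_eh.
- move=> c d f imf; exists (phi f); split.
    split; first exact: kmor_phi.
    by rewrite /= U1.
  by move=> g' _ /= H; apply: U2.
Qed.

End G.

Theorem proposition4p1 (R : realType) :
  adjunction (zeroF R) (forget R) /\
  adjunction (forget R) (oneF R) /\
  (exists cm : forall A B : Iob R, Ihom A B -> Khom R (cmpr_ob A) (cmpr_ob B),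
      adjunction (oneF R) (@Functor (Int R) (Kl R) (@cmpr_ob R) cm)) /\
  (exists qm : forall A B : Iob R, Ihom A B -> Khom R (quot_ob A) (quot_ob B),
      adjunction (@Functor (Int R) (Kl R) (@quot_ob R) qm) (zeroF R)).
Proof.
split; first exact: part1.
split; first exact: part2.
split; first by exists (@cm R); exact: part3.
by exists (fun A B h => @qm R A B h); exact: part4.
Qed.
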